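(* $\mathfrak{b}\leq\mathfrak{a}(\mathcal{BI})$.
   Context: $\mathcal{F}in\times\mathcal{F}in$ is the ideal on $\omega\times\omega$ consisting of those $A$ such that for all but finitely many $n\in\omega$ the set $\{m:(n,m)\in A\}$ is finite. The Boring ideal $\mathcal{BI}$ is the ideal on $\omega^{3}$ consisting of those $A\subseteq\omega^{3}$ such that for every $n\in\omega$ the set $\{(j,k):(n,j,k)\in A\}$ belongs to $\mathcal{F}in\times\mathcal{F}in$, and for all but finitely many $n\in\omega$ the set $A\cap(\{n\}\times\omega^{2})$ is finite. For an ideal $\mathcal{J}$ on a countable set, $\mathfrak{a}(\mathcal{J})$ is the smallest size of an uncountable family $\mathcal{A}$ of $\mathcal{J}$-positive sets (sets not in $\mathcal{J}$) which is maximal with respect to the property that $A\cap B\in\mathcal{J}$ for all distinct $A,B\in\mathcal{A}$. $\mathfrak{b}$ is the bounding number. *)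

(* Defs.v *)
From Stdlib Require Import Arith.

Definition fin_nat (A : nat -> Prop) : Prop :=
  exists N, forall m, A m -> m < N.

Definition fin_nat2 (A : nat * nat -> Prop) : Prop :=
  exists N, forall j k, A (j, k) -> j < N /\ k < N.

Definition FinxFin (A : nat * nat -> Prop) : Prop :=
  exists N, forall n, N <= n -> fin_nat (fun m => A (n, m)).

Definition BI (A : nat * nat * nat -> Prop) : Prop :=
  (forall n, FinxFin (fun p => A (n, fst p, snd p))) /\
  (exists N, forall n, N <= n -> fin_nat2 (fun p => A (n, fst p, snd p))).

Definition setI {T : Type} (A B : T -> Prop) : T -> Prop := fun x => A x /\ B x.

Definition countable_family {T : Type} (F : (T -> Prop) -> Prop) : Prop :=
  exists g : (T -> Prop) -> nat,
    forall A B, F A -> F B -> g A = g B -> A = B.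

Definition uncountable_family {T : Type} (F : (T -> Prop) -> Prop) : Prop :=
  ~ countable_family F.

Definition J_MAD {T : Type} (J : (T -> Prop) -> Prop) (F : (T -> Prop) -> Prop) : Prop :=
  (forall A, F A -> ~ J A) /\
  (forall A B, F A -> F B -> A <> B -> J (setI A B)) /\
  (forall B, ~ J B -> (forall A, F A -> J (setI A B)) -> F B).

Definition eventually_le (g h : nat -> nat) : Prop :=
  exists N, forall n, N <= n -> g n <= h n.

(* Main.v *)
Require Import Defs.
From Stdlib Require Import Arith Lia List Classical ClassicalEpsilon.

Notation T3 := (nat * nat * nat)%type.

Definition wit (P : nat -> Prop) : nat := epsilon (inhabits 0) P.
Lemma wit_spec (P : nat -> Prop) : (exists x, P x) -> P (wit P).
Proof. intro H. exact (epsilon_spec (inhabits 0) P H). Qed.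

Lemma fin_nat_mono (P Q : nat -> Prop) : (forall x, P x -> Q x) -> fin_nat Q -> fin_nat P.
Proof. intros H [N HN]. exists N. intros m Hm. apply HN, H, Hm. Qed.

Lemma fin_nat2_mono (P Q : nat*nat -> Prop) :
  (forall j k, P (j,k) -> Q (j,k)) -> fin_nat2 Q -> fin_nat2 P.
Proof. intros H [N HN]. exists N. intros j k Hm. apply HN, H, Hm. Qed.

Lemma FinxFin_mono (P Q : nat*nat -> Prop) :
  (forall j k, P (j,k) -> Q (j,k)) -> FinxFin Q -> FinxFin P.
Proof.
  intros H [N HN]. exists N. intros n Hn.
  apply (fin_nat_mono _ _ (fun m Hm => H n m Hm)), HN, Hn.
Qed.

Lemma BI_mono (X Y : T3 -> Prop) : (forall x, X x -> Y x) -> BI Y -> BI X.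
Proof.
  intros H [H1 [N H2]]. split.
  - intro n. apply (FinxFin_mono (fun p => X (n, fst p, snd p)) (fun p => Y (n, fst p, snd p))).
    + intros j k Hx. apply H. exact Hx.
    + apply H1.
  - exists N. intros n Hn.
    apply (fin_nat2_mono (fun p => X (n, fst p, snd p)) (fun p => Y (n, fst p, snd p))).
    + intros j k Hx. apply H. exact Hx.
    + apply H2, Hn.
Qed.

Lemma fin_nat_union P Q : fin_nat P -> fin_nat Q -> fin_nat (fun x => P x \/ Q x).
Proof. intros [N1 H1] [N2 H2]. exists (N1 + N2). intros m [Hm|Hm]; [apply H1 in Hm|apply H2 in Hm]; lia. Qed.
Lemma fin_nat2_union P Q : fin_nat2 P -> fin_nat2 Q -> fin_nat2 (fun x => P x \/ Q x).
Proof. intros [N1 H1] [N2 H2]. exists (N1 + N2). intros j k [Hm|Hm]; [apply H1 in Hm|apply H2 in Hm]; lia. Qed.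
Lemma FinxFin_union P Q : FinxFin P -> FinxFin Q -> FinxFin (fun x => P x \/ Q x).
Proof.
  intros [N1 H1] [N2 H2]. exists (N1 + N2). intros n Hn.
  apply (fin_nat_union (fun m => P (n,m)) (fun m => Q (n,m))); [apply H1|apply H2]; lia.
Qed.
Lemma BI_union X Y : BI X -> BI Y -> BI (fun x => X x \/ Y x).
Proof.
  intros [HX1 [N1 HX2]] [HY1 [N2 HY2]]. split.
  - intro n. apply (FinxFin_union (fun p => X (n, fst p, snd p)) (fun p => Y (n, fst p, snd p))); auto.
  - exists (N1 + N2). intros n Hn.
    apply (fin_nat2_union (fun p => X (n, fst p, snd p)) (fun p => Y (n, fst p, snd p)));
      [apply HX2|apply HY2]; lia.
Qed.
Lemma BI_empty : BI (fun _ => False).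
Proof.
  split.
  - intro n. exists 0. intros m _. exists 0. intros k [].
  - exists 0. intros n _. exists 0. intros j k [].
Qed.
Lemma BI_finunion (Q : nat -> T3 -> Prop) M :
  (forall i, i < M -> BI (Q i)) -> BI (fun x => exists i, i < M /\ Q i x).
Proof.
  induction M; intros H.
  - eapply BI_mono; [|apply BI_empty]. intros x [i [Hi _]]; lia.
  - eapply BI_mono; [|apply (BI_union _ _ (IHM (fun i Hi => H i ltac:(lia))) (H M ltac:(lia)))].
    intros x [i [Hi Hq]]. destruct (Nat.eq_dec i M) as [->|Hne].
    + right; exact Hq.
    + left; exists i; split; [lia|exact Hq].
Qed.

Lemma BI_col (Y : T3 -> Prop) c :
  FinxFin (fun p => Y (c, fst p, snd p)) -> BI (fun x => fst (fst x) = c /\ Y x).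
Proof.
  intro H. split.
  - intro n. destruct (Nat.eq_dec n c) as [->|Hne].
    + eapply FinxFin_mono; [|exact H]. intros j k [_ Hy]. exact Hy.
    + exists 0. intros m _. exists 0. intros k [Hc _]. simpl in Hc. congruence.
  - exists (S c). intros n Hn. exists 0. intros j k [Hc _]. simpl in Hc. lia.
Qed.

Lemma finmax (P : nat -> nat -> Prop) N :
  (forall c L L', L <= L' -> P c L -> P c L') -> (forall c, c < N -> exists L, P c L) ->
  exists L, forall c, c < N -> P c L.
Proof.
  intros Hm. induction N; intro H.
  - exists 0. intros; lia.
  - destruct IHN as [L1 H1]. { intros c Hc; apply H; lia. }
    destruct (H N (Nat.lt_succ_diag_r N)) as [L2 H2].
    exists (L1 + L2). intros c Hc. destruct (Nat.eq_dec c N) as [->|Hne].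
    + apply (Hm N L2); [lia|auto].
    + apply (Hm c L1); [lia|apply H1; lia].
Qed.

Fixpoint maxupto (f : nat -> nat) (m : nat) : nat :=
  match m with 0 => f 0 | S m' => Nat.max (maxupto f m') (f (S m')) end.
Lemma maxupto_ge f m k : k <= m -> f k <= maxupto f m.
Proof.
  induction m; intro H; simpl.
  - assert (k = 0) by lia. subst; lia.
  - destruct (Nat.eq_dec k (S m)) as [->|]. lia. specialize (IHm ltac:(lia)). lia.
Qed.

Definition N1w (X : T3 -> Prop) := wit (fun N => forall n, N <= n -> fin_nat2 (fun p => X (n, fst p, snd p))).
Definition Mw (X : T3 -> Prop) n := wit (fun M => forall j k, X (n,j,k) -> j < M /\ k < M).
Definition N2w (X : T3 -> Prop) n := wit (fun N => forall m, N <= m -> fin_nat (fun k => X (n,m,k))).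
Definition bw (X : T3 -> Prop) n j := wit (fun b => forall k, X (n,j,k) -> k < b).
Definition V X n j := N1w X + Mw X n + N2w X n + bw X n j.

Lemma L_N1 X : BI X -> forall n, N1w X <= n -> fin_nat2 (fun p => X (n, fst p, snd p)).
Proof. intros [_ H]. exact (wit_spec _ H). Qed.
Lemma L_M X n : BI X -> N1w X <= n -> forall j k, X (n,j,k) -> j < Mw X n /\ k < Mw X n.
Proof.
  intros HB Hn. refine (wit_spec (fun M => forall j k, X (n,j,k) -> j < M /\ k < M) _).
  destruct (L_N1 X HB n Hn) as [M HM]. exists M. intros j k Hx. exact (HM j k Hx).
Qed.
Lemma L_N2 X n : BI X -> forall m, N2w X n <= m -> fin_nat (fun k => X (n,m,k)).
Proof. intros [H _]. exact (wit_spec (fun N => forall m, N <= m -> fin_nat (fun k => X (n,m,k))) (H n)). Qed.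
Lemma L_b X n j : BI X -> N2w X n <= j -> forall k, X (n,j,k) -> k < bw X n j.
Proof.
  intros HB Hj. refine (wit_spec (fun b => forall k, X (n,j,k) -> k < b) _).
  destruct (L_N2 X n HB j Hj) as [b Hb]. exists b. exact Hb.
Qed.

Definition emptyset : T3 -> Prop := fun _ => False.
Definition pick (F : (T3 -> Prop) -> Prop) (l : list (T3 -> Prop)) : T3 -> Prop :=
  epsilon (inhabits emptyset) (fun A => F A /\ ~ In A l).
Fixpoint pre F n : list (T3 -> Prop) :=
  match n with 0 => nil | S m => pick F (pre F m) :: pre F m end.
Definition seqA F n := pick F (pre F n).

Lemma unc_fresh (F : (T3 -> Prop) -> Prop) : uncountable_family F -> forall l, exists A, F A /\ ~ In A l.
Proof.
  intros HU l. apply NNPP. intro Hn. apply HU.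
  exists (fun A => wit (fun k => nth_error l k = Some A)).
  intros A B HA HB Heq.
  assert (HinA : In A l). { apply NNPP; intro; apply Hn; exists A; auto. }
  assert (HinB : In B l). { apply NNPP; intro; apply Hn; exists B; auto. }
  pose proof (wit_spec (fun k => nth_error l k = Some A) (In_nth_error _ _ HinA)) as EA.
  pose proof (wit_spec (fun k => nth_error l k = Some B) (In_nth_error _ _ HinB)) as EB.
  simpl in EA, EB. rewrite Heq in EA. rewrite EA in EB. congruence.
Qed.
Lemma seqA_spec F : uncountable_family F -> forall n, F (seqA F n) /\ ~ In (seqA F n) (pre F n).
Proof. intros HU n. unfold seqA, pick. apply epsilon_spec. apply unc_fresh; auto. Qed.
Lemma seqA_in F : forall n k, k < n -> In (seqA F k) (pre F n).
Proof.
  induction n; intros k Hk. lia. simpl. destruct (Nat.eq_dec k n) as [->|].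
  left; reflexivity. right; apply IHn; lia.
Qed.
Lemma seqA_inj F : uncountable_family F -> forall i k, seqA F i = seqA F k -> i = k.
Proof.
  intros HU i k E. destruct (lt_eq_lt_dec i k) as [[H|H]|H]; auto.
  - exfalso. apply (proj2 (seqA_spec F HU k)). rewrite <- E. apply seqA_in; auto.
  - exfalso. apply (proj2 (seqA_spec F HU i)). rewrite E. apply seqA_in; auto.
Qed.

Definition gfun (a : nat -> T3 -> Prop) (A : T3 -> Prop) (m : nat) : nat :=
  maxupto (fun i => maxupto (fun n => maxupto (fun j => V (setI A (a i)) n j) m) m) m.
Lemma V_le_g a A i n j m : i <= m -> n <= m -> j <= m -> V (setI A (a i)) n j <= gfun a A m.
Proof.
  intros. unfold gfun.
  eapply Nat.le_trans; [|apply (maxupto_ge _ m i); auto]. cbv beta.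
  eapply Nat.le_trans; [|apply (maxupto_ge _ m n); auto]. cbv beta.
  apply (maxupto_ge (fun j => V (setI A (a i)) n j) m j); auto.
Qed.

Definition m3 i n j := Nat.max i (Nat.max n j).
Definition typeA (Y : T3 -> Prop) := exists c, ~ FinxFin (fun p => Y (c, fst p, snd p)).
Definition cA (Y : T3 -> Prop) := wit (fun c => ~ FinxFin (fun p => Y (c, fst p, snd p))).
Definition jA (h : nat -> nat) (Y : T3 -> Prop) i :=
  wit (fun j => i <= j /\ h (m3 i (cA Y) 0) <= j /\ ~ fin_nat (fun k => Y (cA Y, j, k))).
Definition cB (h : nat -> nat) (Y : T3 -> Prop) i :=
  wit (fun n => i <= n /\ h (m3 i 0 0) <= n /\ ~ fin_nat2 (fun p => Y (n, fst p, snd p))).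
Definition Q (a : nat -> T3 -> Prop) (h : nat -> nat) (i : nat) : T3 -> Prop :=
  fun x => match x with ((n, j), k) =>
    (typeA (a i) /\ n = cA (a i) /\ j = jA h (a i) i /\ a i (n,j,k) /\ h (m3 i n j) <= k) \/
    (~ typeA (a i) /\ n = cB h (a i) i /\ a i (n,j,k) /\ ~ (j < h (m3 i n 0) /\ k < h (m3 i n 0)))
  end.

Lemma jA_spec h Y i : ~ BI Y -> typeA Y ->
  i <= jA h Y i /\ h (m3 i (cA Y) 0) <= jA h Y i /\ ~ fin_nat (fun k => Y (cA Y, jA h Y i, k)).
Proof.
  intros HP HA.
  assert (Hc : ~ FinxFin (fun p => Y (cA Y, fst p, snd p))).
  { exact (wit_spec (fun c => ~ FinxFin (fun p => Y (c, fst p, snd p))) HA). }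
  refine (wit_spec (fun j => i <= j /\ h (m3 i (cA Y) 0) <= j /\ ~ fin_nat (fun k => Y (cA Y, j, k))) _).
  apply NNPP. intro Hn. apply Hc. exists (i + h (m3 i (cA Y) 0)). intros m Hm.
  apply NNPP. intro Hf. apply Hn. exists m. split; [lia|split;[lia|exact Hf]].
Qed.

Lemma cB_spec h Y i : ~ BI Y -> ~ typeA Y ->
  i <= cB h Y i /\ h (m3 i 0 0) <= cB h Y i /\ ~ fin_nat2 (fun p => Y (cB h Y i, fst p, snd p)).
Proof.
  intros HP HT.
  refine (wit_spec (fun n => i <= n /\ h (m3 i 0 0) <= n /\ ~ fin_nat2 (fun p => Y (n, fst p, snd p))) _).
  apply NNPP. intro Hn. apply HP. split.
  - intro c. apply NNPP. intro Hc. apply HT. exists c. exact Hc.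
  - exists (i + h (m3 i 0 0)). intros n Hn'. apply NNPP. intro Hf. apply Hn. exists n.
    split; [lia|split;[lia|exact Hf]].
Qed.

Lemma Q_BI a h i : BI (Q a h i).
Proof.
  destruct (classic (typeA (a i))) as [HA|HA].
  - apply (BI_mono _ (fun x => fst (fst x) = cA (a i) /\ (fun y => snd (fst y) = jA h (a i) i) x)).
    + intros [[n j] k] [H|H]; simpl.
      * destruct H as [_ [-> [-> _]]]. split; reflexivity.
      * destruct H as [H _]; contradiction.
    + apply BI_col. exists (S (jA h (a i) i)). intros m Hm. exists 0. intros k Hk. simpl in Hk. lia.
  - apply (BI_mono _ (fun x => fst (fst x) = cB h (a i) i /\ a i x)).
    + intros [[n j] k] [H|H]; simpl.
      * destruct H as [H _]; contradiction.
      * destruct H as [_ [-> [H _]]]. split; [reflexivity | exact H].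
    + apply BI_col. apply NNPP. intro Hn. apply HA. exists (cB h (a i) i). exact Hn.
Qed.

Lemma Q_disj F a h A i K :
  J_MAD BI F -> (forall i, F (a i)) -> F A -> A <> a i ->
  (forall m, K <= m -> gfun a A m <= h m) -> K <= i ->
  forall x, A x -> Q a h i x -> False.
Proof.
  intros HM Ha HA Hne HK Hi [[n j] k] Hx HQ.
  destruct HM as [Hpos [HAD _]].
  assert (HX : BI (setI A (a i))) by (apply HAD; auto).
  assert (HV : forall n j, V (setI A (a i)) n j <= h (m3 i n j)).
  { intros n' j'. eapply Nat.le_trans;
      [apply (V_le_g a A i n' j' (m3 i n' j')) | apply HK]; unfold m3; lia. }
  cbv beta iota delta [Q] in HQ.
  destruct HQ as [[HT [-> [-> [Hy Hk]]]] | [HT [-> [Hy Hnb]]]].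
  - pose proof (jA_spec h (a i) i (Hpos _ (Ha i)) HT) as [_ [Hj _]].
    assert (H1 : N2w (setI A (a i)) (cA (a i)) <= jA h (a i) i).
    { specialize (HV (cA (a i)) 0). unfold V in HV. lia. }
    pose proof (L_b (setI A (a i)) _ _ HX H1 k (conj Hx Hy)) as Hb.
    specialize (HV (cA (a i)) (jA h (a i) i)). unfold V in HV. lia.
  - pose proof (cB_spec h (a i) i (Hpos _ (Ha i)) HT) as [_ [Hn _]].
    assert (H1 : N1w (setI A (a i)) <= cB h (a i) i).
    { specialize (HV 0 0). unfold V in HV. lia. }
    pose proof (L_M (setI A (a i)) _ HX H1 j k (conj Hx Hy)) as [Hj Hk].
    specialize (HV (cB h (a i) i) 0). unfold V in HV. apply Hnb. lia.
Qed.

Lemma QA_unb a h i : ~ BI (a i) -> typeA (a i) ->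
  ~ fin_nat (fun k => Q a h i (cA (a i), jA h (a i) i, k)).
Proof.
  intros HP HT [N HN].
  pose proof (jA_spec h (a i) i HP HT) as [_ [_ Hf]]. apply Hf.
  exists (N + h (m3 i (cA (a i)) (jA h (a i) i))). intros k Hk.
  destruct (le_lt_dec (h (m3 i (cA (a i)) (jA h (a i) i))) k) as [Hl|Hl]; [|lia].
  assert (k < N); [|lia]. apply HN. cbv beta iota delta [Q]. left. repeat split; auto.
Qed.

Lemma QB_unb a h i : ~ BI (a i) -> ~ typeA (a i) ->
  ~ fin_nat2 (fun p => Q a h i (cB h (a i) i, fst p, snd p)).
Proof.
  intros HP HT [N HN].
  pose proof (cB_spec h (a i) i HP HT) as [_ [_ Hf]]. apply Hf.
  exists (N + h (m3 i (cB h (a i) i) 0)). intros j k Hy.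
  destruct (classic (j < h (m3 i (cB h (a i) i) 0) /\ k < h (m3 i (cB h (a i) i) 0))) as [Hb|Hb]; [lia|].
  assert (j < N /\ k < N); [|lia]. apply HN. cbv beta iota delta [Q]. right. repeat split; auto.
Qed.

Lemma B_pos F a h : J_MAD BI F -> (forall i, F (a i)) -> ~ BI (fun x => exists i, Q a h i x).
Proof.
  intros [Hpos _] Ha HB.
  pose proof HB as [H1 [N H2]].
  destruct (finmax (fun c L => forall m, L <= m -> fin_nat (fun k => exists i, Q a h i (c, m, k))) N) as [L HL].
  { intros c L L' HLL' HP m Hm. apply HP. lia. }
  { intros c _. exact (H1 c). }
  set (i := N + L).
  assert (HiN : N <= i /\ L <= i) by (unfold i; lia).
  destruct (classic (typeA (a i))) as [HT|HT].
  - apply (QA_unb a h i (Hpos _ (Ha i)) HT).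
    assert (Hj : i <= jA h (a i) i) by apply (proj1 (jA_spec h (a i) i (Hpos _ (Ha i)) HT)).
    assert (Hfin : fin_nat (fun k => exists i0, Q a h i0 (cA (a i), jA h (a i) i, k))).
    { destruct (lt_dec (cA (a i)) N) as [Hc|Hc].
      - apply (HL _ Hc). lia.
      - destruct (H2 (cA (a i)) ltac:(lia)) as [M HM]. exists M. intros k Hk.
        exact (proj2 (HM (jA h (a i) i) k Hk)). }
    eapply fin_nat_mono; [|exact Hfin]. intros k Hk. exists i. exact Hk.
  - apply (QB_unb a h i (Hpos _ (Ha i)) HT).
    assert (Hn : i <= cB h (a i) i) by apply (proj1 (cB_spec h (a i) i (Hpos _ (Ha i)) HT)).
    destruct (H2 (cB h (a i) i) ltac:(lia)) as [M HM].
    exists M. intros j k Hk. apply HM. exists i. exact Hk.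
Qed.

Lemma B_AD F a h : J_MAD BI F -> (forall i, F (a i)) -> (forall i k, a i = a k -> i = k) ->
  (forall A, F A -> eventually_le (gfun a A) h) ->
  forall A, F A -> BI (setI A (fun x => exists i, Q a h i x)).
Proof.
  intros HM Ha Hinj Hev A HA.
  destruct (Hev A HA) as [K HK].
  assert (HMx : exists M, forall i, M <= i -> A <> a i).
  { destruct (classic (exists k, A = a k)) as [[k ->]|Hn].
    - exists (S k). intros i Hi E. apply Hinj in E. lia.
    - exists 0. intros i _ E. apply Hn. exists i. exact E. }
  destruct HMx as [M HMx].
  eapply BI_mono; [|apply (BI_finunion (Q a h) (M + K)); intros; apply Q_BI].
  intros x [Hx [i Hq]]. exists i. split; [|exact Hq].
  destruct (lt_dec i (M + K)) as [Hl|Hl]; [exact Hl|]. exfalso.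
  apply (Q_disj F a h A i K HM Ha HA (HMx i ltac:(lia)) HK ltac:(lia) x Hx Hq).
Qed.

Theorem mainTheorem2 :
  forall F : (nat * nat * nat -> Prop) -> Prop,
    J_MAD BI F -> uncountable_family F ->
    exists g : (nat * nat * nat -> Prop) -> (nat -> nat),
      forall h : nat -> nat, exists A, F A /\ ~ eventually_le (g A) h.
Proof.
  intros F HM HU.
  set (a := seqA F).
  assert (Ha : forall i, F (a i)) by (intro i; apply (proj1 (seqA_spec F HU i))).
  assert (Hinj : forall i k, a i = a k -> i = k) by apply (seqA_inj F HU).
  exists (gfun a). intro h.
  apply NNPP. intro Hn.
  assert (Hev : forall A, F A -> eventually_le (gfun a A) h).
  { intros A HA. apply NNPP. intro He. apply Hn. exists A. auto. }
  pose proof (B_AD F a h HM Ha Hinj Hev) as HAD.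
  assert (HFB : F (fun x => exists i, Q a h i x)).
  { apply (proj2 (proj2 HM)); [apply (B_pos F a h HM Ha) | exact HAD]. }
  apply (B_pos F a h HM Ha). eapply BI_mono; [|exact (HAD _ HFB)].
  intros x Hx. split; exact Hx.
Qed.
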